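(* Let $m$ be a positive integer. If $C$ is a ternary extremal self-dual code of length $12m$, then $B_{3i}\equiv 0 \pmod 8$ for every $i=m+1,m+2,\ldots,4m$, where $B_{j}$ denotes the number of codewords of weight $j$ in $C$.
   Context: A ternary code of length $n$ is a linear subspace of $\mathbb{F}_3^n$; it is self-dual if it equals its dual with respect to the standard inner product $\sum_k x_k y_k$. The weight of a vector is the number of its nonzero coordinates. A ternary self-dual code of length $n$ is extremal if its minimum (nonzero) weight equals $3\lfloor n/12\rfloor+3$; for length $12m$ this is $3m+3$. *)

(* Defs.v *)
From HB Require Import structures.
From mathcomp Require Import all_boot all_order all_algebra.
Set Implicit Arguments. Unset Strict Implicit. Unset Printing Implicit Defensive.
Import GRing.Theory.
Local Open Scope ring_scope.

Notation tvec n := 'rV['F_3]_n.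

Notation tcode n := {vspace tvec n}.

Definition tdot n (x y : tvec n) : 'F_3 := \sum_(k < n) x 0 k * y 0 k.

Definition wt n (x : tvec n) : nat := #|[set k : 'I_n | x 0 k != 0]|.

Definition dual_set n (C : tcode n) : {set tvec n} :=
  [set x : tvec n | [forall y : tvec n, (y \in C) ==> (tdot x y == 0)]].

Definition self_dual n (C : tcode n) : Prop :=
  forall x : tvec n, (x \in C) = (x \in dual_set C).

Definition min_weight_is n (C : tcode n) (d : nat) : Prop :=
  (exists2 x : tvec n, (x \in C) && (x != 0) & wt x = d) /\
  (forall x : tvec n, x \in C -> x != 0 -> (d <= wt x)%N).

Definition extremal n (C : tcode n) : Prop :=
  self_dual C /\ min_weight_is C (3 * (n %/ 12) + 3)%N.

Definition B n (C : tcode n) (j : nat) : nat :=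
  #|[set x : tvec n | (x \in C) && (wt x == j)]|.

(* Main.v *)
Require Import Defs.
From HB Require Import structures.
From mathcomp Require Import all_boot all_order all_algebra.
From mathcomp Require Import all_field ring zify.
Set Implicit Arguments. Unset Strict Implicit. Unset Printing Implicit Defensive.
Import GRing.Theory Num.Theory.
Local Open Scope ring_scope.

Section MW.
Variable R : idomainType.
Definition hh (n w : nat) : {poly R} := (1 + 'X *+ 2) ^+ (n - w) * (1 - 'X) ^+ w.
Definition MM (n : nat) (F : {poly R}) : {poly R} := \sum_(w < n.+1) F`_w *: hh n w.

Lemma MM_add n F G : MM n (F + G) = MM n F + MM n G.
Proof. by rewrite /MM -big_split /=; apply: eq_bigr => i _; rewrite coefD scalerDl. Qed.
Lemma MM_scale n c F : MM n (c *: F) = c *: MM n F.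
Proof. by rewrite /MM scaler_sumr; apply: eq_bigr => i _; rewrite coefZ scalerA. Qed.
Lemma MM_opp n F : MM n (- F) = - MM n F.
Proof. by rewrite -scaleN1r MM_scale scaleN1r. Qed.
Lemma MM_sub n F G : MM n (F - G) = MM n F - MM n G.
Proof. by rewrite MM_add MM_opp. Qed.
Lemma MM0 n : MM n 0 = 0.
Proof. by rewrite /MM big1 // => i _; rewrite coef0 scale0r. Qed.
Lemma MM_sum n I (r : seq I) (F : I -> {poly R}) :
  MM n (\sum_(i <- r) F i) = \sum_(i <- r) MM n (F i).
Proof. exact: (big_morph _ (MM_add n) (MM0 n)). Qed.
Lemma MM_Xn n k : (k <= n)%N -> MM n 'X^k = hh n k.
Proof.
move=> kn; rewrite /MM (bigD1 (Ordinal (kn : (k < n.+1)%N))) //= coefXn eqxx scale1r.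
rewrite big1 ?addr0 // => i ik; rewrite coefXn.
have /negbTE -> : (i : nat) != k by apply: contra ik => /eqP ik'; apply/eqP/val_inj.
by rewrite scale0r.
Qed.

Lemma poly_expand n (F : {poly R}) : (size F <= n.+1)%N ->
  F = \sum_(i < n.+1) F`_i *: 'X^i.
Proof.
move=> sF; apply/polyP => k; rewrite coef_sum.
case: (ltnP k n.+1) => kn.
  rewrite (bigD1 (Ordinal kn)) //= coefZ coefXn eqxx mulr1 big1 ?addr0 // => i.
  move=> ik; rewrite coefZ coefXn; case: eqP => [ki|]; last by rewrite mulr0.
  by case/eqP: ik; apply: val_inj.
rewrite nth_default ?(leq_trans sF) // big1 // => i _.
rewrite coefZ coefXn; case: eqP => [ki|]; last by rewrite mulr0.
by move: (ltn_ord i); rewrite -ki ltnNge kn.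
Qed.

Lemma hhM (n1 n2 i j : nat) : (i <= n1)%N -> (j <= n2)%N ->
  hh (n1 + n2) (i + j) = hh n1 i * hh n2 j.
Proof.
move=> hi hj; rewrite /hh.
have -> : (n1 + n2 - (i + j) = (n1 - i) + (n2 - j))%N by lia.
rewrite !exprD; ring.
Qed.

Lemma MM_mul n1 n2 (F G : {poly R}) : (size F <= n1.+1)%N -> (size G <= n2.+1)%N ->
  MM (n1 + n2) (F * G) = MM n1 F * MM n2 G.
Proof.
move=> sF sG; rewrite {1}(poly_expand sF) {1}(poly_expand sG).
rewrite mulr_suml MM_sum [MM n1 F]/MM mulr_suml; apply: eq_bigr => i _.
rewrite mulr_sumr MM_sum [MM n2 G]/MM mulr_sumr; apply: eq_bigr => j _.
rewrite -scalerAl -scalerAr -exprD !MM_scale MM_Xn; last first.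
  by have := ltn_ord i; have := ltn_ord j; lia.
by rewrite hhM -1?ltnS // -scalerAl -scalerAr.
Qed.

Definition g4 : {poly R} := 1 + 'X^3 *+ 8.
Definition g12 : {poly R} := 'X^3 * (1 - 'X^3) ^+ 3.

Lemma MM_g4 : MM 4 g4 = 9%:R *: g4.
Proof.
rewrite /g4 MM_add -scaler_nat MM_scale -(expr0 'X) !MM_Xn // /hh /=.
rewrite -!mul_polyC !rmorph_nat. ring.
Qed.


Lemma MM_g12 : MM 12 g12 = (3%:R ^+ 6) *: g12.
Proof.
have -> : g12 = 'X^3 - 'X^6 *+ 3 + 'X^9 *+ 3 - 'X^12 by rewrite /g12; ring.
rewrite -!scaler_nat !(MM_add, MM_opp, MM_scale) !MM_Xn // /hh /=.
rewrite -!mul_polyC !(rmorph_nat, rmorphXn). ring.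
Qed.

Lemma size_g4 : (size g4 <= 5)%N.
Proof.
apply/leq_sizeP => j hj; rewrite /g4 coefD coefMn coefXn coef1.
have /negbTE-> : j != 0%N by lia.
have /negbTE-> : j != 3%N by lia.
by rewrite mul0rn addr0.
Qed.

Lemma size_g12 : (size g12 <= 13)%N.
Proof.
have -> : g12 = 'X^3 - 'X^6 *+ 3 + 'X^9 *+ 3 - 'X^12 by rewrite /g12; ring.
apply/leq_sizeP => j hj; rewrite !(coefD, coefB, coefN, coefMNn, coefMn, coefXn).
have /negbTE-> : j != 3%N by lia. have /negbTE-> : j != 6%N by lia.
have /negbTE-> : j != 9%N by lia. have /negbTE-> : j != 12%N by lia.
by rewrite /= ?(mul0rn, oppr0, addr0, add0r).
Qed.

Lemma size_exp_le (p : {poly R}) d a : (size p <= d.+1)%N -> (size (p ^+ a) <= (d * a).+1)%N.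
Proof.
move=> sp; case: (eqVneq p 0) => [->|p0].
  by case: a => [|a]; rewrite ?expr0 ?size_poly1 // expr0n size_poly0.
have : (size (p ^+ a)).-1 = (size p).-1 * a by exact: size_exp.
have : (size (p ^+ a) > 0)%N by rewrite size_poly_gt0 expf_neq0.
have : ((size p).-1 <= d)%N by rewrite -ltnS; case: (size p) sp.
move=> h1 h2 h3; rewrite -(prednK h2) ltnS h3; exact: leq_mul.
Qed.

Lemma MM_exp (p : {poly R}) d c a : (size p <= d.+1)%N -> MM d p = c *: p ->
  MM (d * a) (p ^+ a) = c ^+ a *: p ^+ a.
Proof.
move=> sp hp; elim: a => [|a IH].
  rewrite muln0 !expr0 scale1r /MM big_ord1 /hh coef1 /= !expr0 mulr1.
  by rewrite scale1r.
rewrite mulnS !exprS MM_mul // ?size_exp_le // hp IH.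
by rewrite -scalerAl -scalerAr scalerA.
Qed.

Definition bb (m j : nat) : {poly R} := g4 ^+ (3 * (m - j)) * g12 ^+ j.

Lemma MM_bb m j : (j <= m)%N -> MM (12 * m) (bb m j) = (3%:R ^+ (6 * m)) *: bb m j.
Proof.
move=> jm; have -> : (12 * m = 4 * (3 * (m - j)) + 12 * j)%N by lia.
rewrite /bb MM_mul ?(size_exp_le, size_g4, size_g12) //.
rewrite (MM_exp _ size_g4 MM_g4) (MM_exp _ size_g12 MM_g12).
rewrite -scalerAl -scalerAr scalerA; congr (_ *: _).
rewrite -exprM -!natrX -natrM; congr (_ %:R).
rewrite (_ : 9 = 3 ^ 2)%N // -!expnM -expnD; congr (_ ^ _)%N; lia.
Qed.

Lemma size_bb m j : (j <= m)%N -> (size (bb m j) <= (12 * m).+1)%N.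
Proof.
move=> jm; rewrite /bb; have h0 := size_polyMleq (g4 ^+ (3 * (m - j))) (g12 ^+ j).
have h1 := size_exp_le (3 * (m - j)) size_g4.
have h2 := size_exp_le j size_g12.
lia.
Qed.

End MW.

Definition s3 (R : nzSemiRingType) (p : {poly R}) := forall w, ~~ (3 %| w)%N -> p`_w = 0.
Definition q8 (p : {poly int}) := p`_0 = 1 /\ forall w, (0 < w)%N -> (8 %| p`_w)%Z.

Lemma s3M (R : idomainType) (p q : {poly R}) : s3 p -> s3 q -> s3 (p * q).
Proof.
move=> hp hq w hw; rewrite coefM big1 // => i _.
case: (boolP (3 %| i)%N) => h3; last by rewrite hp // mul0r.
rewrite hq ?mulr0 //; apply: contra hw => h.
by rewrite -(subnK (_ : (i <= w)%N)) ?dvdn_add // -ltnS.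
Qed.

Lemma s3X (R : idomainType) (p : {poly R}) a : s3 p -> s3 (p ^+ a).
Proof.
move=> hp; elim: a => [|a IH]; last by rewrite exprS; apply: s3M.
by move=> w hw; rewrite expr0 coef1; case: eqP hw => // ->.
Qed.

Lemma s3_g4 (R : idomainType) : s3 (g4 R).
Proof.
move=> w hw; rewrite /g4 coefD coefMn coefXn coef1.
have /negbTE-> : w != 0%N by apply: contra hw => /eqP ->.
have /negbTE-> : w != 3%N by apply: contra hw => /eqP ->.
by rewrite mul0rn addr0.
Qed.

Lemma s3_g12 (R : idomainType) : s3 (g12 R).
Proof.
have -> : g12 R = 'X^3 - 'X^6 *+ 3 + 'X^9 *+ 3 - 'X^12 by rewrite /g12; ring.
move=> w hw; rewrite !(coefD, coefB, coefN, coefMNn, coefMn, coefXn).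
have /negbTE-> : w != 3%N by apply: contra hw => /eqP ->.
have /negbTE-> : w != 6%N by apply: contra hw => /eqP ->.
have /negbTE-> : w != 9%N by apply: contra hw => /eqP ->.
have /negbTE-> : w != 12%N by apply: contra hw => /eqP ->.
by rewrite /= ?(mul0rn, oppr0, addr0, add0r).
Qed.

Lemma s3_bb (R : idomainType) m j : s3 (bb R m j).
Proof. by rewrite /bb; apply: s3M; apply: s3X; [apply: s3_g4 | apply: s3_g12]. Qed.

Lemma q8M p q : q8 p -> q8 q -> q8 (p * q).
Proof.
move=> [p0 hp] [q0 hq]; split; first by rewrite coef0M p0 q0 mulr1.
move=> w w0; rewrite coefM; apply: rpred_sum => i _.
case: (posnP i) => [->|ip]; last by apply: dvdz_mulr; apply: hp.
by rewrite p0 mul1r subn0; apply: hq.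
Qed.

Lemma q8_g4 : q8 (g4 int).
Proof.
split; first by rewrite /g4 coefD coefMn coefXn coef1.
move=> w w0; rewrite /g4 coefD coefMn coefXn coef1.
have /negbTE-> : w != 0%N by lia.
rewrite add0r; case: (w == 3)%N; rewrite /= ?mul0rn //.
Qed.

Lemma q8X p a : q8 p -> q8 (p ^+ a).
Proof.
move=> hp; elim: a => [|a IH]; last by rewrite exprS; apply: q8M.
split; first by rewrite expr0 coef1.
move=> w w0; rewrite expr0 coef1; have /negbTE-> : w != 0%N by lia.
exact: rpred0.
Qed.

Lemma bb_low m j w : (0 < j)%N -> (w < 3 * j)%N -> (bb int m j)`_w = 0.
Proof.
move=> j0 wj.
have -> : bb int m j = 'X^(3 * j) * (g4 int ^+ (3 * (m - j)) * (1 - 'X^3) ^+ (3 * j)).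
  rewrite /bb /g12 exprMn exprM -exprM mulrCA; congr (_ * (_ * _)); by rewrite -exprM.
by rewrite coefXnM wj.
Qed.

Lemma bb_mid m j : (bb int m j)`_(3 * j) = 1.
Proof.
have -> : bb int m j = 'X^(3 * j) * (g4 int ^+ (3 * (m - j)) * (1 - 'X^3) ^+ (3 * j)).
  rewrite /bb /g12 exprMn exprM -exprM mulrCA; congr (_ * (_ * _)); by rewrite -exprM.
rewrite coefXnM ltnn subnn -horner_coef0 hornerM !horner_exp /g4.
by rewrite !hornerE !expr0n /= !mulr0n ?mulr0 subr0 addr0 !expr1n mulr1.
Qed.

Definition Good m K (P : {poly int}) :=
  [/\ MM (12 * m) P = (3%:R ^+ (6 * m)) *: P, (size P <= (12 * m).+1)%N, s3 P, q8 P &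
      forall k, (0 < k <= K)%N -> P`_(3 * k) = 0].

Lemma construct m K : (K <= m)%N -> exists P, Good m K P.
Proof.
elim: K => [_|K IH Km].
  exists (bb int m 0); split.
  - exact: MM_bb.
  - exact: size_bb.
  - exact: s3_bb.
  - by rewrite /bb expr0 mulr1; apply: q8X; apply: q8_g4.
  - by move=> k; lia.
have [P [hM hs h3 [h0 h8] hk]] := IH (ltnW Km).
set c := P`_(3 * K.+1).
exists (P - c *: bb int m K.+1); split.
- by rewrite MM_sub MM_scale MM_bb // scalerBr !scalerA hM (mulrC c).
- apply/leq_sizeP => j hj; rewrite coefB coefZ !nth_default ?mulr0 ?subr0 //.
    exact: leq_trans (size_bb _ Km) hj.
  exact: leq_trans hs hj.
- by move=> w hw; rewrite coefB coefZ h3 // s3_bb // mulr0 subr0.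
- split; first by rewrite coefB coefZ bb_low // ?mulr0 ?subr0 //; lia.
  move=> w w0; rewrite coefB coefZ; apply: rpredB; first exact: h8.
  by apply: dvdz_mulr; apply: h8; lia.
- move=> k /andP [k0 kK]; rewrite coefB coefZ.
  case: (ltngtP k K.+1) => [kl|kg|->]; last by rewrite bb_mid mulr1 subrr.
  + by rewrite hk ?k0 // bb_low // ?mulr0 ?subr0 //; lia.
  + lia.
Qed.

Definition omega : algC := sval (C_prim_root_exists (isT : (0 < 3)%N)).
Lemma omega_prim : 3.-primitive_root omega.
Proof. exact: svalP (C_prim_root_exists _). Qed.
Lemma omega3 : omega ^+ 3 = 1.
Proof. exact: prim_expr_order omega_prim. Qed.
Lemma omega_neq i j : (i < 3)%N -> (j < 3)%N -> i != j -> omega ^+ i != omega ^+ j.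
Proof.
move=> hi hj hij; rewrite (eq_prim_root_expr omega_prim) !modn_small //.
Qed.

Lemma comp_exp (p q : {poly algC}) k : p ^+ k \Po q = (p \Po q) ^+ k.
Proof.
elim: k => [|k IH]; first by rewrite !expr0 comp_polyC.
by rewrite !exprS comp_polyM IH.
Qed.

Lemma rot_s3 (D : {poly algC}) z : z ^+ 3 = 1 -> s3 D -> D \Po (z *: 'X) = D.
Proof.
move=> z3 hD; rewrite comp_polyE -[RHS]coefK poly_def; apply: eq_bigr => i _.
rewrite exprZn scalerA; congr (_ *: _).
case: (boolP (3 %| i)%N) => h; last by rewrite hD // mul0r.
by rewrite -(divnK h) mulnC exprM z3 expr1n mulr1.
Qed.

Definition L (r : algC) a := ('X - r%:P) ^+ a.

Lemma copL (r s : algC) a : r != s -> coprimep (L r a) (L s a).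
Proof.
move=> rs; apply: coprimep_expl; apply: coprimep_expr; apply: coprimep_XsubC2.
by rewrite subr_eq0 eq_sym.
Qed.

Lemma unique (n a : nat) (c : algC) (D : {poly algC}) :
  c != 0 -> (size D <= n.+1)%N -> (n < 4 * a)%N ->
  (forall w, (w < a)%N -> D`_w = 0) -> s3 D -> MM n D = c *: D -> D = 0.
Proof.
move=> c0 sD na lowD s3D hM.
have d0 : L 0 a %| D.
  rewrite /L subr0 -(poly_take_drop a D).
  have -> : take_poly a D = 0.
    by apply/polyP => i; rewrite coef_take_poly coef0; case: ifP => // /lowD.
  by rewrite add0r dvdp_mulIr.
have d1 : L 1 a %| D.
  rewrite -(dvdpZr _ _ c0) -hM /MM; apply: (big_ind (fun p => L 1 a %| p)) => //; first exact: dvdp_add.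
  move=> w _; case: (ltnP w a) => wa; first by rewrite lowD // scale0r dvdp0.
  rewrite -mul_polyC; apply: dvdp_mull; rewrite /hh; apply: dvdp_mull.
  rewrite -(subnKC wa) exprD; apply: dvdp_mulr.
  have -> : (1 - 'X : {poly algC}) = (- 1) *: ('X - 1%:P) by rewrite scaleN1r opprB.
  by rewrite exprZn dvdpZr ?dvdpp // expf_neq0 // oppr_eq0 oner_eq0.
have drot : forall r, r ^+ 3 = 1 -> L r a %| D.
  move=> r r3; have r0 : r != 0.
    by apply/eqP => h; move: r3; rewrite h expr0n /= => /esym/eqP; rewrite oner_eq0.
  have z3 : r^-1 ^+ 3 = 1 by rewrite exprVn r3 invr1.
  have := dvdp_comp_poly (r^-1 *: 'X) d1; rewrite (rot_s3 z3 s3D).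
  rewrite /L comp_exp comp_polyB comp_polyX comp_polyC.
  have -> : r^-1 *: 'X - 1%:P = r^-1 *: ('X - r%:P).
    by rewrite scalerBr; congr (_ - _); rewrite -mul_polyC -polyCM mulVf.
  by rewrite exprZn dvdpZl // expf_neq0 // invr_eq0.
have o1 := omega_neq (isT : (1 < 3)%N) (isT : (0 < 3)%N) isT.
have o2 := omega_neq (isT : (2 < 3)%N) (isT : (0 < 3)%N) isT.
have o12 := omega_neq (isT : (1 < 3)%N) (isT : (2 < 3)%N) isT.
rewrite expr0 expr1 in o1 o12; rewrite expr0 in o2.
have om0 : omega != 0.
  by apply/eqP => h; move: omega3; rewrite h expr0n /= => /esym/eqP; rewrite oner_eq0.
have om20 : omega ^+ 2 != 0 by rewrite expf_neq0.
have dw := drot _ omega3.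
have dw2 : L (omega ^+ 2) a %| D by apply: drot; rewrite -exprM mulnC exprM omega3 expr1n.
have dall : L 0 a * L 1 a * L omega a * L (omega ^+ 2) a %| D.
  rewrite Gauss_dvdp ?dw2 ?andbT; last first.
    by rewrite !coprimepMl !copL // eq_sym.
  rewrite Gauss_dvdp ?dw ?andbT; last by rewrite !coprimepMl !copL // eq_sym.
  by rewrite Gauss_dvdp ?d0 ?d1 // copL // eq_sym oner_eq0.
apply/eqP; apply: contraTT na => D0; rewrite -leqNgt.
have := dvdp_leq D0 dall.
have nz : forall r, L r a != 0 by move=> r; rewrite -size_poly_eq0 size_exp_XsubC.
rewrite !size_mul ?mulf_neq0 ?nz // !size_exp_XsubC.
move=> h; have := leq_trans h sD; lia.
Qed.

Lemma F3_cases (a : 'F_3) : [\/ a = 0, a = 1 | a = 2].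
Proof.
case: a => [[|[|[|k]]] h].
- by constructor 1; apply: val_inj.
- by constructor 2; apply: val_inj.
- by constructor 3; apply: val_inj.
- by [].
Qed.
Lemma F3_sum (V : zmodType) (g : 'F_3 -> V) : \sum_(b : 'F_3) g b = g 0 + g 1 + g 2.
Proof.
rewrite (bigD1 0) //= (bigD1 1) //= (bigD1 2) //= big_pred0 ?addr0 ?addrA //.
by move=> b; case: (F3_cases b) => ->.
Qed.
Lemma F3_sq (a : 'F_3) : a * a = (a != 0)%:R.
Proof. by case: (F3_cases a) => ->; apply/eqP. Qed.
Lemma F3_nat k : ((k%:R : 'F_3) == 0) = (3 %| k)%N.
Proof.
have h := val_Fp_nat (isT : prime 3) k.
apply/idP/idP => [/eqP E|/dvdnP [q kq]].
  have := congr1 (@nat_of_ord _) E; rewrite h => /= E'.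
  by rewrite /dvdn E'.
apply/eqP; apply: ord_inj; rewrite h kq modnMl //.
Qed.
Lemma F3_val (a : 'F_3) : (val a < 3)%N.
Proof. by case: (F3_cases a) => ->. Qed.
Lemma F3_add (a b : 'F_3) : val (a + b) = ((val a + val b) %% 3)%N.
Proof. by case: (F3_cases a) => ->; case: (F3_cases b) => ->. Qed.
Lemma F3_mulval (a b : 'F_3) : val (a * b) = ((val a * val b) %% 3)%N.
Proof. by case: (F3_cases a) => ->; case: (F3_cases b) => ->. Qed.

Definition ee (a : 'F_3) : algC := omega ^+ (nat_of_ord a).

Lemma om_mod k : omega ^+ (k %% 3) = omega ^+ k.
Proof. by rewrite {2}(divn_eq k 3) exprD mulnC exprM omega3 expr1n mul1r. Qed.

Lemma om_sum : 1 + omega + omega ^+ 2 = 0.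
Proof.
have h : (omega - 1) * (1 + omega + omega ^+ 2) = omega ^+ 3 - 1 by ring.
rewrite omega3 subrr in h.
move/eqP: h; rewrite mulf_eq0 subr_eq0 => /orP [|/eqP //].
by have := omega_neq (isT : (1 < 3)%N) (isT : (0 < 3)%N) isT; rewrite expr1 expr0 => /negbTE ->.
Qed.

Lemma ee0 : ee 0 = 1.
Proof. by rewrite /ee expr0. Qed.

Lemma eeD a b : ee (a + b) = ee a * ee b.
Proof.
rewrite /ee -exprD -[RHS]om_mod; congr (_ ^+ _).
Qed.

Lemma ee_sum I (r : seq I) (F : I -> 'F_3) : ee (\sum_(i <- r) F i) = \prod_(i <- r) ee (F i).
Proof. exact: (big_morph _ eeD ee0). Qed.

Lemma ee_ne1 a : a != 0 -> ee a != 1.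
Proof.
case: (F3_cases a) => -> // _; rewrite /ee -(expr0 omega).
  exact: (omega_neq (isT : (1 < 3)%N) (isT : (0 < 3)%N) isT).
exact: (omega_neq (isT : (2 < 3)%N) (isT : (0 < 3)%N) isT).
Qed.

Lemma inner_sum (x : 'F_3) :
  \sum_(b : 'F_3) ee (b * x) *: (if b != 0 then 'X else 1 : {poly algC}) =
  if x == 0 then 1 + 'X *+ 2 else 1 - 'X.
Proof.
rewrite F3_sum /= mul0r ee0 scale1r.
have h1 : omega *: 'X + omega ^+ 2 *: 'X = - 'X :> {poly algC}.
  by rewrite -scalerDl (_ : omega + omega ^+ 2 = -1) ?scaleN1r // -[RHS]add0r -om_sum; ring.
case: (F3_cases x) => ->.
- by rewrite !mulr0 ee0 !scale1r addrA.
- rewrite (_ : ee (1 * 1) = omega); last by rewrite /ee -[RHS]expr1; congr (_ ^+ _).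
  rewrite (_ : ee (2 * 1) = omega ^+ 2); last by rewrite /ee; congr (_ ^+ _).
  by rewrite /= -addrA h1.
- rewrite (_ : ee (1 * 2) = omega ^+ 2); last by rewrite /ee; congr (_ ^+ _).
  rewrite (_ : ee (2 * 2) = omega); last by rewrite /ee -[RHS]expr1; congr (_ ^+ _).
  by rewrite /= -addrA (addrC (_ *: _)) h1.
Qed.

Lemma wt_card n (x : tvec n) : wt x = #|[pred k | x 0 k != 0]|.
Proof. by rewrite /wt; apply: eq_card => k; rewrite inE. Qed.

Lemma wt_le n (x : tvec n) : (wt x <= n)%N.
Proof. by rewrite wt_card; apply: leq_trans (max_card _) _; rewrite card_ord. Qed.

Lemma wt0 n (x : tvec n) : (wt x == 0%N) = (x == 0).
Proof.
rewrite wt_card; apply/idP/eqP => [/eqP/card0_eq h|->].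
  apply/matrixP => i k; rewrite (ord1 i) mxE; have := h k; rewrite !inE /=.
  by move/negbFE/eqP.
by apply/eqP; apply: eq_card0 => k; rewrite !inE mxE eqxx.
Qed.

Lemma prod_if n (x : tvec n) (A B : {poly algC}) :
  \prod_(k < n) (if x 0 k == 0 then A else B) = A ^+ (n - wt x) * B ^+ (wt x).
Proof.
rewrite (bigID (fun k => x 0 k == 0)) /=.
rewrite (eq_bigr (fun _ => A)); last by move=> k ->.
rewrite [X in _ * X](eq_bigr (fun _ => B)); last by move=> k /negbTE ->.
rewrite !prodr_const wt_card; congr (_ ^+ _ * _ ^+ _).
have hc := cardC [pred k | x 0 k != 0]; rewrite card_ord in hc.
have -> : subn n #|[pred k | x 0 k != 0]| = #|[predC [pred k | x 0 k != 0]]|.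
  apply/eqP; rewrite -(eqn_add2l #|[pred k | x 0 k != 0]|) subnKC ?hc //.
  by apply: leq_trans (max_card _) _; rewrite card_ord.
apply: eq_card => k; rewrite !inE /= negbK //.
Qed.

Lemma chi_sum n (x : tvec n) :
  \sum_(y : tvec n) ee (tdot y x) *: 'X^(wt y) = hh algC n (wt x).
Proof.
rewrite /hh -prod_if.
rewrite (eq_bigr (fun k => \sum_(b : 'F_3) ee (b * x 0 k) *: (if b != 0 then 'X else 1))); last first.
  by move=> k _; rewrite inner_sum.
rewrite bigA_distr_bigA /=.
have bij : bijective (fun y : tvec n => [ffun k => y 0 k]).
  exists (fun f : {ffun 'I_n -> 'F_3} => \row_k f k) => [y|f]; first by apply/rowP => k; rewrite mxE ffunE.
  by apply/ffunP => k; rewrite ffunE mxE.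
rewrite (reindex _ (onW_bij _ bij)) /=; apply: eq_bigr => y _.
rewrite scaler_prod; congr (_ *: _).
  by rewrite /tdot ee_sum; apply: eq_bigr => k _; rewrite ffunE.
rewrite wt_card (eq_bigr (fun k => if y 0 k != 0 then 'X else 1)); last by move=> k _; rewrite ffunE.
by rewrite -big_mkcond prodr_const.
Qed.

Lemma tdotD n (y x z : tvec n) : tdot y (x + z) = tdot y x + tdot y z.
Proof. by rewrite /tdot -big_split; apply: eq_bigr => k _; rewrite mxE mulrDr. Qed.

Lemma char_out n (C : tcode n) (y : tvec n) : self_dual C -> y \notin C ->
  \sum_(x in C) ee (tdot y x) = 0.
Proof.
move=> sd; rewrite sd inE negb_forall => /existsP [x0]; rewrite negb_imply => /andP [x0C nz].
set S := \sum_(x in C) _.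
have : S = S * ee (tdot y x0).
  rewrite /S [LHS](reindex_inj (addIr x0)) /= mulr_suml.
  have eqC : forall x, (x + x0 \in C) = (x \in C).
    move=> x; apply/idP/idP => h; last exact: memvD.
    by rewrite -(addrK x0 x) memvB.
  rewrite (eq_bigl (fun x => x \in C)) => [|x]; last by rewrite eqC.
  by apply: eq_bigr => x _; rewrite tdotD eeD.
move/eqP; rewrite -subr_eq0 -{1}(mulr1 S) -mulrBr mulf_eq0 subr_eq0 eq_sym.
by case/orP => [/eqP <- //|]; rewrite eq_sym (negbTE (ee_ne1 nz)).
Qed.

Lemma char_in n (C : tcode n) (y : tvec n) : self_dual C -> y \in C ->
  \sum_(x in C) ee (tdot y x) = #|C|%:R.
Proof.
move=> sd yC; rewrite -sumr_const; apply: eq_bigr => x xC.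
move: yC; rewrite sd inE => /forallP /(_ x); rewrite xC /= => /eqP ->.
exact: ee0.
Qed.

Lemma macw n (C : tcode n) : self_dual C ->
  #|C|%:R *: \sum_(y in C) 'X^(wt y) = \sum_(x in C) hh algC n (wt x).
Proof.
move=> sd; rewrite scaler_sumr.
transitivity (\sum_(y : tvec n) (\sum_(x in C) ee (tdot y x)) *: 'X^(wt y)).
  rewrite [RHS](bigID (fun y => y \in C)) /= [X in _ = _ + X]big1 ?addr0.
    by apply: eq_bigr => y yC; rewrite char_in.
  by move=> y yC; rewrite char_out // scale0r.
rewrite (eq_bigr (fun y => \sum_(x in C) ee (tdot y x) *: 'X^(wt y))); last first.
  by move=> y _; rewrite scaler_suml.
rewrite exchange_big /=; apply: eq_bigr => x _; exact: chi_sum.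
Qed.

Lemma sum_wt n (C : tcode n) (V : zmodType) (G : nat -> V) :
  \sum_(x in C) G (wt x) = \sum_(w < n.+1) G w *+ B C w.
Proof.
rewrite (partition_big (fun x => inord (wt x) : 'I_n.+1) xpredT) //=.
apply: eq_bigr => w _.
rewrite (eq_bigr (fun _ => G w)); last first.
  by move=> x /andP [_ /eqP <-]; rewrite inordK // ltnS wt_le.
rewrite sumr_const; congr (_ *+ _); rewrite /B cardsE; apply: eq_card => x.
rewrite !unfold_in /=; congr (_ && _).
apply/eqP/eqP => [h|h]; first by rewrite -h inordK // ltnS wt_le.
by apply: val_inj; rewrite /= inordK // ltnS wt_le.
Qed.

Lemma map_hh n w : map_poly (intr : int -> algC) (hh int n w) = hh algC n w.
Proof. by rewrite /hh rmorphM !rmorphXn rmorphB rmorphD rmorph1 rmorphMn /= map_polyX. Qed.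

Lemma MM_map n (P : {poly int}) : MM n (map_poly (intr : int -> algC) P) = map_poly intr (MM n P).
Proof.
rewrite /MM rmorph_sum; apply: eq_bigr => w _.
by rewrite /= map_polyZ map_hh coef_map.
Qed.

Lemma B0 n (C : tcode n) : B C 0 = 1%N.
Proof.
rewrite /B (_ : [set x | _] = [set 0 : tvec n]) ?cards1 //; apply/setP => x.
rewrite !inE wt0; case: eqP => [->|]; by rewrite ?mem0v ?andbF.
Qed.

Lemma wt3 n (C : tcode n) x : self_dual C -> x \in C -> (3 %| wt x)%N.
Proof.
move=> sd xC; have := xC; rewrite sd inE => /forallP /(_ x); rewrite xC /=.
rewrite /tdot (eq_bigr (fun k => ((x 0 k != 0) : nat)%:R)); last by move=> k _; rewrite F3_sq.
have -> : wt x = \sum_(k < n) (nat_of_bool (x 0 k != 0)) :> nat.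
  rewrite wt_card -sum1_card big_mkcond /=; apply: eq_bigr => k _.
  by rewrite inE; case: (x 0 k != 0).
by rewrite -F3_nat natr_sum.
Qed.

Lemma hh_at1 n w : (hh algC n w).[1] = (3 ^ (n - w))%:R * (w == 0%N)%:R.
Proof.
rewrite /hh hornerM !horner_exp !hornerD hornerN !hornerX -polyC1 hornerC subrr expr0n. by rewrite natrX -[3%N]/(1 + 2)%N natrD mulr2n.
Qed.

Theorem corollary3p3 (m : nat) (C : tcode (12 * m)%N) :
  (0 < m)%N -> extremal C ->
  forall i : nat, (m.+1 <= i <= 4 * m)%N -> (8 %| B C (3 * i))%N.
Proof.
move=> m0 [sd [_ hmin]] i /andP [im1 i4m].
rewrite mulKn // in hmin.
have Blow : forall w, (0 < w)%N -> (w < 3 * m + 3)%N -> B C w = 0%N.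
  move=> w w0 w3; rewrite /B; apply/eqP; rewrite cards_eq0; apply/eqP/setP => x.
  rewrite !inE; case: (boolP (x \in C)) => //= xC; apply/negbTE.
  case: (eqVneq x 0) => [->|x0].
    by have := wt0 (0 : tvec (12 * m)); rewrite eqxx => /eqP ->; rewrite eq_sym -lt0n.
  by have := hmin x xC x0; apply: contraTneq => ->; rewrite -ltnNge.
have B3 : forall w, ~~ (3 %| w)%N -> B C w = 0%N.
  move=> w w3; rewrite /B; apply/eqP; rewrite cards_eq0; apply/eqP/setP => x.
  rewrite !inE; case: (boolP (x \in C)) => //= xC; apply/negbTE.
  by apply: contra w3 => /eqP <-; apply: wt3.
set n := (12 * m)%N.
set fC : {poly algC} := \poly_(w < n.+1) (B C w)%:R.
have fCE : fC = \sum_(w < n.+1) 'X^w *+ B C w.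
  by rewrite /fC poly_def; apply: eq_bigr => w _; rewrite scaler_nat.
have MfC : MM n fC = \sum_(w < n.+1) hh algC n w *+ B C w.
  rewrite /MM; apply: eq_bigr => w _; rewrite coef_poly ltn_ord scaler_nat //.
have mw : #|C|%:R *: fC = MM n fC.
  by rewrite MfC fCE -!sum_wt; apply: macw.
have sumB : \sum_(w < n.+1) (B C w)%:R = #|C|%:R :> algC.
  rewrite -(sum_wt C (fun _ => (1 : algC))) sumr_const //.
have hcard : #|C| = (3 ^ (6 * m))%N.
  have := congr1 (fun p => p.[1]) mw; rewrite /= MfC fCE hornerZ !horner_sum.
  rewrite (eq_bigr (fun w : 'I_n.+1 => (B C w)%:R)); last first.
    by move=> w _; rewrite hornerMn hornerXn expr1n.
  rewrite sumB big_ord_recl /= big1; last first.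
    by move=> w _; rewrite hornerMn hh_at1 /= mulr0 mul0rn.
  rewrite hornerMn B0 addr0 hh_at1 mulr1 subn0 -natrM.
  have e3 : (3 ^ n = (3 ^ (6 * m)) ^ 2)%N by rewrite -expnM /n; congr (expn _ _); lia.
  by rewrite mulr1n => /eqP; rewrite eqr_nat e3 -[(#|C| * #|C|)%N]/(#|C| ^ 2)%N eqn_exp2r // => /eqP.
have [P [hM hs h3 [h0 h8] hk]] := construct (leqnn m).
set D := fC - map_poly (intr : int -> algC) P.
have D0 : D = 0.
  apply: (@unique n (3 * m + 3) ((3 ^ (6 * m))%:R)).
  - by rewrite pnatr_eq0 expn_eq0.
  - apply/leq_sizeP => j hj; rewrite coefB coef_map coef_poly ltnNge hj /=.
    by rewrite nth_default ?subrr // (leq_trans hs).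
  - rewrite /n; lia.
  - move=> w w3; rewrite coefB coef_map coef_poly (leq_trans w3) ?ltnS; last by rewrite /n; lia.
    case: (posnP w) => [->|w0]; first by rewrite B0 h0 subrr.
    rewrite Blow // mulr0n; case: (boolP (3 %| w)%N) => h; last by rewrite h3 // subrr.
    rewrite -(divnK h) mulnC hk ?subrr //; apply/andP; split.
      by rewrite divn_gt0 // -(divnK h); move: w0; rewrite -(divnK h); lia.
    move: w3; rewrite -{1}(divnK h); lia.
  - move=> w w3; rewrite coefB coef_map h3 // coef_poly B3 //; by case: ifP; rewrite subrr.
  - rewrite MM_sub MM_map hM -mw hcard map_polyZ /= scalerBr; congr (_ - _ *: _).
    by rewrite rmorphXn rmorph_nat natrX.
have := congr1 (fun p : {poly algC} => p`_(3 * i)) D0; rewrite /= /D coefB coef_map coef0 coef_poly.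
rewrite (_ : (3 * i < n.+1)%N); last by rewrite /n; lia.
move/eqP; rewrite subr_eq0 => /eqP hB.
have hPB : P`_(3 * i) = (B C (3 * i))%:Z.
  by apply: (@intr_inj algC); rewrite -hB.
have := h8 (3 * i)%N; rewrite hPB dvdzE /=; apply; lia.
Qed.
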